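(* Let $D$ be a weak bialgebra in $\mathcal C$ which is a weak crossed biproduct of a coalgebra $C$ and a weak Hopf algebra $B$ (playing the role of the algebra $A$), with preunit $\nu$, precounit $\upsilon$, associated idempotent $\nabla_{C\otimes B}$, coproduct $\delta_{C\otimes B}$ and morphism $\tau_B^C:C\otimes B\rightarrow B\otimes B$. Let $\beta_\nu=(C\otimes\mu_B)\circ(\nu\otimes B)$. If $\delta_{C\otimes B}\circ\beta_\nu=(\beta_\nu\otimes\beta_\nu)\circ\delta_B$, $\tau_B^C=(\varepsilon_C\otimes\delta_B)\circ\nabla_{C\otimes B}$ and $\upsilon=(\varepsilon_C\otimes\varepsilon_B)\circ\nabla_{C\otimes B}$, then there exist morphisms $f:B\rightarrow D$ and $g:D\rightarrow B$ such that $(D,B,f,g)$ is a weak bialgebra with a weak projection.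
   Context: $\mathcal C$ is a strict braided monoidal category with tensor product $\otimes$, unit object $K$ and braiding $c$, in which every idempotent splits. Algebras have unit $\eta$, product $\mu$; coalgebras counit $\varepsilon$, coproduct $\delta$; $f\wedge g=\mu\circ(f\otimes g)\circ\delta$. Weak bialgebra: algebra and coalgebra $D$ with $\delta_D\circ\mu_D=(\mu_D\otimes\mu_D)\circ(D\otimes c_{D,D}\otimes D)\circ(\delta_D\otimes\delta_D)$; $\varepsilon_D\circ\mu_D\circ(\mu_D\otimes D)=((\varepsilon_D\circ\mu_D)\otimes(\varepsilon_D\circ\mu_D))\circ(D\otimes\delta_D\otimes D)=((\varepsilon_D\circ\mu_D)\otimes(\varepsilon_D\circ\mu_D))\circ(D\otimes(c_{D,D}^{-1}\circ\delta_D)\otimes D)$; $(\delta_D\otimes D)\circ\delta_D\circ\eta_D=(D\otimes\mu_D\otimes D)\circ((\delta_D\circ\eta_D)\otimes(\delta_D\circ\eta_D))=(D\otimes(\mu_D\circ c_{D,D}^{-1})\otimes D)\circ((\delta_D\circ\eta_D)\otimes(\delta_D\circ\eta_D))$. Weak Hopf algebra: additionally an antipode $\lambda_D$ with $id_D\wedge\lambda_D=\Pi_D^L$, $\lambda_D\wedge id_D=\Pi_D^R$, $\lambda_D\wedge id_D\wedge\lambda_D=\lambda_D$, where $\Pi_D^L=((\varepsilon_D\circ\mu_D)\otimes D)\circ(D\otimes c_{D,D})\circ((\delta_D\circ\eta_D)\otimes D)$, $\Pi_D^R=(D\otimes(\varepsilon_D\circ\mu_D))\circ(c_{D,D}\otimes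 D)\circ(D\otimes(\delta_D\circ\eta_D))$. Weak projection $(D,B,f,g)$: $D$ weak bialgebra, $B$ weak Hopf algebra, $f:B\rightarrow D$ algebra and coalgebra morphism, $g:D\rightarrow B$ coalgebra morphism, $g\circ f=id_B$, $g\circ\mu_D\circ(D\otimes f)=\mu_B\circ(g\otimes B)$. Weak crossed product on $C\otimes A$ ($A$ algebra, $C$ object): given $\psi_A^C:A\otimes C\rightarrow C\otimes A$ with $(C\otimes\mu_A)\circ(\psi_A^C\otimes A)\circ(A\otimes\psi_A^C)=\psi_A^C\circ(\mu_A\otimes C)$, $\nabla_{C\otimes A}=(C\otimes\mu_A)\circ((\psi_A^C\circ(\eta_A\otimes C))\otimes A)$ (idempotent, image $C\times A$, injection $i_{C\otimes A}$, projection $p_{C\otimes A}$); $\sigma_A^C:C\otimes C\rightarrow C\otimes A$ with $\nabla_{C\otimes A}\circ\sigma_A^C=\sigma_A^C$; twisted condition $(C\otimes\mu_A)\circ(\sigma_A^C\otimes A)\circ(C\otimes\psi_A^C)\circ(\psi_A^C\otimes C)=(C\otimes\mu_A)\circ(\psi_A^C\otimes A)\circ(A\otimes\sigma_A^C)$; cocycle condition $(C\otimes\mu_A)\circ(\sigma_A^C\otimes A)\circ(C\otimes\sigma_A^C)=(C\otimes\mu_A)\circ(\sigma_A^C\otimes A)\circ(C\otimes\psi_A^C)\circ(\sigma_A^C\otimes C)$; product $\mu_{C\otimes A}=(C\otimes\mu_A)\circ(\sigma_A^C\otimes\mu_A)\circ(C\otimes\psi_A^C\otimes A)$. Preunit $\nu:K\rightarrow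 C\otimes A$, with $\beta_\nu=(C\otimes\mu_A)\circ(\nu\otimes A)$: $(C\otimes\mu_A)\circ(\sigma_A^C\otimes A)\circ(C\otimes\psi_A^C)\circ(\nu\otimes C)=\nabla_{C\otimes A}\circ(C\otimes\eta_A)$, $(C\otimes\mu_A)\circ(\sigma_A^C\otimes A)\circ(C\otimes\nu)=\nabla_{C\otimes A}\circ(C\otimes\eta_A)$, $(C\otimes\mu_A)\circ(\psi_A^C\otimes A)\circ(A\otimes\nu)=\beta_\nu$. Then $C\times A$ is an algebra with product $p_{C\otimes A}\circ\mu_{C\otimes A}\circ(i_{C\otimes A}\otimes i_{C\otimes A})$ and unit $p_{C\otimes A}\circ\nu$. Weak crossed coproduct on $C\otimes A$ ($C$ coalgebra, $A$ object): $\chi_A^C:C\otimes A\rightarrow A\otimes C$ with $(\chi_A^C\otimes C)\circ(C\otimes\chi_A^C)\circ(\delta_C\otimes A)=(A\otimes\delta_C)\circ\chi_A^C$; $\Gamma_{C\otimes A}=(C\otimes A\otimes\varepsilon_C)\circ(C\otimes\chi_A^C)\circ(\delta_C\otimes A)$ (idempotent); $\tau_A^C:C\otimes A\rightarrow A\otimes A$ with $\tau_A^C\circ\Gamma_{C\otimes A}=\tau_A^C$; twisted $(\tau_A^C\otimes C)\circ(C\otimes\chi_A^C)\circ(\delta_C\otimes A)=(A\otimes\chi_A^C)\circ(\chi_A^C\otimes A)\circ(C\otimes\tau_A^C)\circ(\delta_C\otimes A)$; cocycle $(\tau_A^C\otimes A)\circ(C\otimes\tau_A^C)\circ(\delta_C\otimes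 A)=(A\otimes\tau_A^C)\circ(\chi_A^C\otimes A)\circ(C\otimes\tau_A^C)\circ(\delta_C\otimes A)$; coproduct $\delta_{C\otimes A}=(C\otimes\chi_A^C\otimes A)\circ(\delta_C\otimes\tau_A^C)\circ(\delta_C\otimes A)$. Precounit $\upsilon:C\otimes A\rightarrow K$, with $\gamma_\upsilon=(C\otimes\upsilon)\circ(\delta_C\otimes A)$: $(A\otimes\upsilon)\circ(\chi_A^C\otimes A)\circ(C\otimes\tau_A^C)\circ(\delta_C\otimes A)=(\varepsilon_C\otimes A)\circ\Gamma_{C\otimes A}$, $(\upsilon\otimes A)\circ(C\otimes\tau_A^C)\circ(\delta_C\otimes A)=(\varepsilon_C\otimes A)\circ\Gamma_{C\otimes A}$, $(\upsilon\otimes C)\circ(C\otimes\chi_A^C)\circ(\delta_C\otimes A)=\gamma_\upsilon$. Then the image of $\Gamma_{C\otimes A}$ (injection $i$, projection $p$) is a coalgebra with coproduct $(p\otimes p)\circ\delta_{C\otimes A}\circ i$ and counit $\upsilon\circ i$. A weak bialgebra $D$ is a weak crossed biproduct of the coalgebra $C$ with the algebra $A$ (morphisms $\psi_A^C,\sigma_A^C,\chi_A^C,\tau_A^C$, preunit $\nu$, precounit $\upsilon$) if: $(C\otimes A,\mu_{C\otimes A})$ is a weak crossed product with preunit $\nu$; $(C\otimes A,\delta_{C\otimes A})$ is a weak crossed coproduct with precounit $\upsilon$; $\nabla_{C\otimes A}=\Gamma_{C\otimes A}$; there is an isomorphism of algebras and coalgebras $C\times A\rightarrow D$; and $(\varepsilon_C\otimes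 A)\circ\nu=\eta_A$, $\upsilon\circ(C\otimes\eta_A)=\varepsilon_C$. *)

(* Defs.v *)
(* A strict braided monoidal category in which every idempotent
   splits, presented in single-sorted form (one type of morphisms with source
   and target maps).  Strictness is then expressed by plain equalities of
   objects and of morphisms, with no transport along associators. *)
Set Implicit Arguments.
Unset Strict Implicit.

Record SBMCat := {
  Obj : Type;
  Mor : Type;
  src : Mor -> Obj;
  tgt : Mor -> Obj;
  idm : Obj -> Mor;
  comp : Mor -> Mor -> Mor;           (* comp g f = g o f *)
  tens : Obj -> Obj -> Obj;
  tensm : Mor -> Mor -> Mor;
  unitK : Obj;
  braid : Obj -> Obj -> Mor;
  braid_inv : Obj -> Obj -> Mor;
  src_idm : forall A, src (idm A) = A;
  tgt_idm : forall A, tgt (idm A) = A;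
  src_comp : forall f g, tgt f = src g -> src (comp g f) = src f;
  tgt_comp : forall f g, tgt f = src g -> tgt (comp g f) = tgt g;
  comp_id_r : forall f, comp f (idm (src f)) = f;
  comp_id_l : forall f, comp (idm (tgt f)) f = f;
  comp_assoc : forall f g h, tgt f = src g -> tgt g = src h ->
    comp h (comp g f) = comp (comp h g) f;
  src_tensm : forall f g, src (tensm f g) = tens (src f) (src g);
  tgt_tensm : forall f g, tgt (tensm f g) = tens (tgt f) (tgt g);
  tensm_idm : forall A B, tensm (idm A) (idm B) = idm (tens A B);
  tensm_comp : forall f f' g g', tgt f = src g -> tgt f' = src g' ->
    tensm (comp g f) (comp g' f') = comp (tensm g g') (tensm f f');
  tens_assoc : forall A B C, tens (tens A B) C = tens A (tens B C);
  tens_unit_l : forall A, tens unitK A = A;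
  tens_unit_r : forall A, tens A unitK = A;
  tensm_assoc : forall f g h, tensm (tensm f g) h = tensm f (tensm g h);
  tensm_unit_l : forall f, tensm (idm unitK) f = f;
  tensm_unit_r : forall f, tensm f (idm unitK) = f;
  src_braid : forall A B, src (braid A B) = tens A B;
  tgt_braid : forall A B, tgt (braid A B) = tens B A;
  src_braid_inv : forall A B, src (braid_inv A B) = tens B A;
  tgt_braid_inv : forall A B, tgt (braid_inv A B) = tens A B;
  braid_inv_l : forall A B, comp (braid_inv A B) (braid A B) = idm (tens A B);
  braid_inv_r : forall A B, comp (braid A B) (braid_inv A B) = idm (tens B A);
  braid_nat : forall f g,
    comp (braid (tgt f) (tgt g)) (tensm f g) = comp (tensm g f) (braid (src f) (src g));
  braid_hex1 : forall A B C,
    braid A (tens B C) = comp (tensm (idm B) (braid A C)) (tensm (braid A B) (idm C));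
  braid_hex2 : forall A B C,
    braid (tens A B) C = comp (tensm (braid A C) (idm B)) (tensm (idm A) (braid B C));
  idem_split : forall A e, src e = A -> tgt e = A -> comp e e = e ->
    exists X i p, src i = X /\ tgt i = A /\ src p = A /\ tgt p = X /\
      comp p i = idm X /\ comp i p = e
}.

Arguments src {_} _.  Arguments tgt {_} _.  Arguments idm {_} _.
Arguments comp {_} _ _.  Arguments tens {_} _ _.  Arguments tensm {_} _ _.
Arguments unitK {_}.  Arguments braid {_} _ _.  Arguments braid_inv {_} _ _.

Declare Scope cat_scope.
Delimit Scope cat_scope with cat.
Notation "g ∘ f" := (comp g f) (at level 40, left associativity) : cat_scope.
Notation "f ⊗ g" := (tensm f g) (at level 35, right associativity) : cat_scope.
Notation "A ⊙ B" := (tens A B) (at level 34, right associativity) : cat_scope.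
Open Scope cat_scope.

Section Defs.
Variable Ct : SBMCat.
Local Notation Ob := (Obj Ct).
Local Notation M := (Mor Ct).
Local Notation K := (@unitK Ct).
Local Notation c := (@braid Ct).
Local Notation ci := (@braid_inv Ct).
Local Notation id := (@idm Ct).

Definition hom (f : M) (A B : Ob) : Prop := src f = A /\ tgt f = B.

Definition wedge (mu delta f g : M) : M := mu ∘ (f ⊗ g) ∘ delta.

Definition is_algebra (A : Ob) (eta mu : M) : Prop :=
  hom eta K A /\ hom mu (A ⊙ A) A /\
  mu ∘ (mu ⊗ id A) = mu ∘ (id A ⊗ mu) /\
  mu ∘ (eta ⊗ id A) = id A /\ mu ∘ (id A ⊗ eta) = id A.

Definition is_coalgebra (C : Ob) (eps delta : M) : Prop :=
  hom eps C K /\ hom delta C (C ⊙ C) /\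
  (delta ⊗ id C) ∘ delta = (id C ⊗ delta) ∘ delta /\
  (eps ⊗ id C) ∘ delta = id C /\ (id C ⊗ eps) ∘ delta = id C.

Definition is_alg_morphism (A : Ob) (etaA muA : M) (B : Ob) (etaB muB : M)
  (f : M) : Prop :=
  hom f A B /\ f ∘ etaA = etaB /\ f ∘ muA = muB ∘ (f ⊗ f).

Definition is_coalg_morphism (A : Ob) (epsA deltaA : M) (B : Ob) (epsB deltaB : M)
  (f : M) : Prop :=
  hom f A B /\ epsB ∘ f = epsA /\ deltaB ∘ f = (f ⊗ f) ∘ deltaA.

Definition is_weak_bialgebra (D : Ob) (eta mu eps delta : M) : Prop :=
  is_algebra D eta mu /\ is_coalgebra D eps delta /\
  delta ∘ mu = (mu ⊗ mu) ∘ (id D ⊗ c D D ⊗ id D) ∘ (delta ⊗ delta) /\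
  eps ∘ mu ∘ (mu ⊗ id D) =
    ((eps ∘ mu) ⊗ (eps ∘ mu)) ∘ (id D ⊗ delta ⊗ id D) /\
  eps ∘ mu ∘ (mu ⊗ id D) =
    ((eps ∘ mu) ⊗ (eps ∘ mu)) ∘ (id D ⊗ (ci D D ∘ delta) ⊗ id D) /\
  (delta ⊗ id D) ∘ delta ∘ eta =
    (id D ⊗ mu ⊗ id D) ∘ ((delta ∘ eta) ⊗ (delta ∘ eta)) /\
  (delta ⊗ id D) ∘ delta ∘ eta =
    (id D ⊗ (mu ∘ ci D D) ⊗ id D) ∘ ((delta ∘ eta) ⊗ (delta ∘ eta)).

Definition PiL (D : Ob) (eta mu eps delta : M) : M :=
  ((eps ∘ mu) ⊗ id D) ∘ (id D ⊗ c D D) ∘ ((delta ∘ eta) ⊗ id D).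

Definition PiR (D : Ob) (eta mu eps delta : M) : M :=
  (id D ⊗ (eps ∘ mu)) ∘ (c D D ⊗ id D) ∘ (id D ⊗ (delta ∘ eta)).

Definition is_weak_hopf (D : Ob) (eta mu eps delta lam : M) : Prop :=
  is_weak_bialgebra D eta mu eps delta /\ hom lam D D /\
  wedge mu delta (id D) lam = PiL D eta mu eps delta /\
  wedge mu delta lam (id D) = PiR D eta mu eps delta /\
  wedge mu delta (wedge mu delta lam (id D)) lam = lam.

Definition is_weak_projection (D : Ob) (etaD muD epsD deltaD : M)
  (B : Ob) (etaB muB epsB deltaB lamB : M) (f g : M) : Prop :=
  is_weak_bialgebra D etaD muD epsD deltaD /\
  is_weak_hopf B etaB muB epsB deltaB lamB /\
  is_alg_morphism B etaB muB D etaD muD f /\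
  is_coalg_morphism B epsB deltaB D epsD deltaD f /\
  is_coalg_morphism D epsD deltaD B epsB deltaB g /\
  g ∘ f = id B /\
  g ∘ muD ∘ (id D ⊗ f) = muB ∘ (g ⊗ id B).

Definition nabla (C A : Ob) (etaA muA psi : M) : M :=
  (id C ⊗ muA) ∘ ((psi ∘ (etaA ⊗ id C)) ⊗ id A).

Definition beta_nu (C A : Ob) (muA nu : M) : M := (id C ⊗ muA) ∘ (nu ⊗ id A).

Definition mu_CA (C A : Ob) (muA psi sigma : M) : M :=
  (id C ⊗ muA) ∘ (sigma ⊗ muA) ∘ (id C ⊗ psi ⊗ id A).

Definition is_weak_crossed_product (C A : Ob) (etaA muA psi sigma nu : M) : Prop :=
  hom psi (A ⊙ C) (C ⊙ A) /\ hom sigma (C ⊙ C) (C ⊙ A) /\ hom nu K (C ⊙ A) /\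
  (id C ⊗ muA) ∘ (psi ⊗ id A) ∘ (id A ⊗ psi) = psi ∘ (muA ⊗ id C) /\
  nabla C A etaA muA psi ∘ nabla C A etaA muA psi = nabla C A etaA muA psi /\
  nabla C A etaA muA psi ∘ sigma = sigma /\
  (id C ⊗ muA) ∘ (sigma ⊗ id A) ∘ (id C ⊗ psi) ∘ (psi ⊗ id C) =
    (id C ⊗ muA) ∘ (psi ⊗ id A) ∘ (id A ⊗ sigma) /\
  (id C ⊗ muA) ∘ (sigma ⊗ id A) ∘ (id C ⊗ sigma) =
    (id C ⊗ muA) ∘ (sigma ⊗ id A) ∘ (id C ⊗ psi) ∘ (sigma ⊗ id C) /\
  (id C ⊗ muA) ∘ (sigma ⊗ id A) ∘ (id C ⊗ psi) ∘ (nu ⊗ id C) =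
    nabla C A etaA muA psi ∘ (id C ⊗ etaA) /\
  (id C ⊗ muA) ∘ (sigma ⊗ id A) ∘ (id C ⊗ nu) =
    nabla C A etaA muA psi ∘ (id C ⊗ etaA) /\
  (id C ⊗ muA) ∘ (psi ⊗ id A) ∘ (id A ⊗ nu) = beta_nu C A muA nu.

Definition Gamma (C A : Ob) (epsC deltaC chi : M) : M :=
  (id C ⊗ id A ⊗ epsC) ∘ (id C ⊗ chi) ∘ (deltaC ⊗ id A).

Definition gamma_ups (C A : Ob) (deltaC ups : M) : M := (id C ⊗ ups) ∘ (deltaC ⊗ id A).

Definition delta_CA (C A : Ob) (deltaC chi tau : M) : M :=
  (id C ⊗ chi ⊗ id A) ∘ (deltaC ⊗ tau) ∘ (deltaC ⊗ id A).

Definition is_weak_crossed_coproduct (C A : Ob) (epsC deltaC chi tau ups : M) : Prop :=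
  hom chi (C ⊙ A) (A ⊙ C) /\ hom tau (C ⊙ A) (A ⊙ A) /\ hom ups (C ⊙ A) K /\
  (chi ⊗ id C) ∘ (id C ⊗ chi) ∘ (deltaC ⊗ id A) = (id A ⊗ deltaC) ∘ chi /\
  Gamma C A epsC deltaC chi ∘ Gamma C A epsC deltaC chi = Gamma C A epsC deltaC chi /\
  tau ∘ Gamma C A epsC deltaC chi = tau /\
  (tau ⊗ id C) ∘ (id C ⊗ chi) ∘ (deltaC ⊗ id A) =
    (id A ⊗ chi) ∘ (chi ⊗ id A) ∘ (id C ⊗ tau) ∘ (deltaC ⊗ id A) /\
  (tau ⊗ id A) ∘ (id C ⊗ tau) ∘ (deltaC ⊗ id A) =
    (id A ⊗ tau) ∘ (chi ⊗ id A) ∘ (id C ⊗ tau) ∘ (deltaC ⊗ id A) /\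
  (id A ⊗ ups) ∘ (chi ⊗ id A) ∘ (id C ⊗ tau) ∘ (deltaC ⊗ id A) =
    (epsC ⊗ id A) ∘ Gamma C A epsC deltaC chi /\
  (ups ⊗ id A) ∘ (id C ⊗ tau) ∘ (deltaC ⊗ id A) =
    (epsC ⊗ id A) ∘ Gamma C A epsC deltaC chi /\
  (ups ⊗ id C) ∘ (id C ⊗ chi) ∘ (deltaC ⊗ id A) = gamma_ups C A deltaC ups.

(* D is a weak crossed biproduct of the coalgebra C with the algebra A.
   C x A is realised through a splitting (X, i, p) of nabla = Gamma
   (any two splittings are canonically isomorphic). *)
Definition is_weak_crossed_biproduct
  (D : Ob) (etaD muD epsD deltaD : M)
  (C : Ob) (epsC deltaC : M) (A : Ob) (etaA muA : M)
  (psi sigma chi tau nu ups : M) : Prop :=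
  is_weak_bialgebra D etaD muD epsD deltaD /\
  is_coalgebra C epsC deltaC /\ is_algebra A etaA muA /\
  is_weak_crossed_product C A etaA muA psi sigma nu /\
  is_weak_crossed_coproduct C A epsC deltaC chi tau ups /\
  nabla C A etaA muA psi = Gamma C A epsC deltaC chi /\
  (exists (X : Ob) (i p w w' : M),
      hom i X (C ⊙ A) /\ hom p (C ⊙ A) X /\
      p ∘ i = id X /\ i ∘ p = nabla C A etaA muA psi /\
      hom w X D /\ hom w' D X /\ w' ∘ w = id X /\ w ∘ w' = id D /\
      is_alg_morphism X (p ∘ nu) (p ∘ mu_CA C A muA psi sigma ∘ (i ⊗ i))
                      D etaD muD w /\
      is_coalg_morphism X (ups ∘ i) ((p ⊗ p) ∘ delta_CA C A deltaC chi tau ∘ i)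
                        D epsD deltaD w) /\
  (epsC ⊗ id A) ∘ nu = etaA /\
  ups ∘ (id C ⊗ etaA) = epsC.

End Defs.

(* Main.v *)
Require Import Defs.
From Stdlib Require Import Setoid.

Ltac objn := rewrite ?tens_assoc, ?tens_unit_l, ?tens_unit_r.

Ltac st :=
  repeat (first [ rewrite src_tensm | rewrite tgt_tensm | rewrite src_idm | rewrite tgt_idm
     | match goal with H : src ?x = _ |- context [src ?x] => rewrite H end
     | match goal with H : tgt ?x = _ |- context [tgt ?x] => rewrite H end
     | rewrite src_comp by st | rewrite tgt_comp by st ]);
  objn; reflexivity.

Section G.
Context {Ct : SBMCat}.
Implicit Types f g h : Mor Ct.
Lemma tcomp (f1 g1 f2 g2 : Mor Ct) : tgt f1 = src g1 -> tgt f2 = src g2 ->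
  (g1 ⊗ g2) ∘ (f1 ⊗ f2) = (g1∘f1) ⊗ (g2∘f2).
Proof. intros; rewrite tensm_comp; auto. Qed.
Lemma tcompR (f1 g1 f2 g2 g3 : Mor Ct) : tgt f1 = tens (src g1) (src g2) -> tgt f2 = src g3 ->
  (g1 ⊗ (g2 ⊗ g3)) ∘ (f1 ⊗ f2) = ((g1 ⊗ g2)∘f1) ⊗ (g3∘f2).
Proof. intros; rewrite <- tensm_assoc, tensm_comp; auto. rewrite src_tensm; auto. Qed.
Lemma tcompL (f1 g1 f2 g2 f3 : Mor Ct) : tens (tgt f1) (tgt f2) = src g1 -> tgt f3 = src g2 ->
  (g1 ⊗ g2) ∘ (f1 ⊗ (f2 ⊗ f3)) = (g1∘(f1 ⊗ f2)) ⊗ (g2∘f3).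
Proof. intros; rewrite <- tensm_assoc, tensm_comp; auto. rewrite tgt_tensm; auto. Qed.
Lemma idr f A : src f = A -> f ∘ idm A = f.
Proof. intros <-; apply comp_id_r. Qed.
Lemma idl f A : tgt f = A -> idm A ∘ f = f.
Proof. intros <-; apply comp_id_l. Qed.
Lemma sl1 f g A B : tgt f = A -> src g = B -> f ⊗ g = (idm A ⊗ g) ∘ (f ⊗ idm B).
Proof. intros; rewrite tcomp, idl, idr; auto; subst; rewrite ?tgt_idm, ?src_idm; auto. Qed.
Lemma sl2 f g A B : src f = A -> tgt g = B -> f ⊗ g = (f ⊗ idm B) ∘ (idm A ⊗ g).
Proof. intros; rewrite tcomp, idl, idr; auto; subst; rewrite ?tgt_idm, ?src_idm; auto. Qed.
End G.

Ltac fuse_pair g1 g2 f1 f2 :=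
  first [ rewrite (tcomp f1 g1 f2 g2) by st
        | match g2 with tensm ?g2a ?g2b => rewrite (tcompR f1 g1 f2 g2a g2b) by st end
        | match f2 with tensm ?f2a ?f2b => rewrite (tcompL f1 g1 f2a g2 f2b) by st end ].

Ltac fuse :=
  match goal with
  | |- context [comp (comp ?h (tensm ?g1 ?g2)) (tensm ?f1 ?f2)] =>
      rewrite <- (@comp_assoc _ (tensm f1 f2) (tensm g1 g2) h) by st; fuse_pair g1 g2 f1 f2
  | |- context [comp (tensm ?g1 ?g2) (tensm ?f1 ?f2)] => fuse_pair g1 g2 f1 f2
  end.

Ltac idelim :=
  match goal with
  | |- context [comp (idm ?A) ?f] => rewrite (idl f A) by st
  | |- context [comp ?f (idm ?A)] => rewrite (idr f A) by st
  end.

Ltac lcomp := repeat (match goal with |- context [comp ?h (comp ?g ?f)] =>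
    rewrite (@comp_assoc _ f g h) by st end).

Ltac sst :=
  repeat (first [ rewrite src_tensm | rewrite tgt_tensm | rewrite src_idm | rewrite tgt_idm
     | match goal with H : src ?x = _ |- context [src ?x] => rewrite H end
     | match goal with H : tgt ?x = _ |- context [tgt ?x] => rewrite H end
     | rewrite src_comp by st | rewrite tgt_comp by st ]).
Ltac nf := sst; objn; rewrite <- ?tensm_idm; rewrite ?tensm_assoc, ?tensm_unit_l, ?tensm_unit_r; lcomp.
Ltac nstep := first [ fuse | (rewrite ?tensm_idm; idelim) ].
Ltac norm := repeat (nf; nstep); nf.
Section G2.
Context {Ct : SBMCat}.
Lemma ufl (f g h : Mor Ct) : tgt f = src g -> (g ∘ f) ⊗ h = (g ⊗ h) ∘ (f ⊗ idm (src h)).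
Proof. intros; rewrite tcomp, idr; auto. rewrite tgt_idm; auto. Qed.
Lemma ufr (h g f : Mor Ct) : tgt f = src g -> h ⊗ (g ∘ f) = (h ⊗ g) ∘ (idm (src h) ⊗ f).
Proof. intros; rewrite tcomp, idr; auto. rewrite tgt_idm; auto. Qed.
End G2.
Section G3.
Context {Ct : SBMCat}.
Lemma kk1 (f g : Mor Ct) X : src f = unitK -> src g = unitK -> tgt f = X ->
  (idm X ⊗ g) ∘ f = f ⊗ g.
Proof. intros sf sg tf. transitivity ((idm X ⊗ g) ∘ (f ⊗ idm unitK)).
  rewrite tensm_unit_r; auto. rewrite tcomp by st. rewrite idl by st. rewrite idr by st. auto. Qed.
Lemma kk2 (f g : Mor Ct) Y : src f = unitK -> src g = unitK -> tgt g = Y ->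
  (f ⊗ idm Y) ∘ g = f ⊗ g.
Proof. intros sf sg tg. transitivity ((f ⊗ idm Y) ∘ (idm unitK ⊗ g)).
  rewrite tensm_unit_l; auto. rewrite tcomp by st. rewrite idl by st. rewrite idr by st. auto. Qed.
Lemma kk (f g : Mor Ct) X Y : src f = unitK -> src g = unitK -> tgt f = X -> tgt g = Y ->
  (idm X ⊗ g) ∘ f = (f ⊗ idm Y) ∘ g.
Proof. intros. rewrite kk1, kk2; auto. Qed.
End G3.

Ltac cl := repeat (nf; (rewrite ?tensm_idm; idelim)); nf.
Ltac fzp g f :=
  match g with tensm ?g1 ?g2 => match f with tensm ?f1 ?f2 => fuse_pair g1 g2 f1 f2 end end.
Ltac fz g f :=
  first [ match goal with
  | |- context [comp (comp ?h g) f] =>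
      rewrite <- (@comp_assoc _ f g h) by st; fzp g f
  end | fzp g f ]; cl.
Ltac fzr g f :=
  first [ match goal with
  | |- context [comp (comp ?h g) f] =>
      rewrite <- (@comp_assoc _ f g h) by st; fzp g f
  end | fzp g f ].
Ltac uf := repeat (match goal with
  | |- context [tensm ?h (comp ?g ?f)] => rewrite (ufr h g f) by st
  | |- context [tensm (comp ?g ?f) ?h] => rewrite (ufl f g h) by st end); cl.
Section G4.
Context {Ct : SBMCat}.
Lemma ptL (g1 g2 f : Mor Ct) : src g1 = unitK -> tgt f = src g2 -> (g1 ⊗ g2) ∘ f = g1 ⊗ (g2 ∘ f).
Proof. intros. transitivity ((g1 ⊗ g2) ∘ (idm unitK ⊗ f)). rewrite tensm_unit_l; auto.
  rewrite tcomp by st. rewrite idr by st. auto. Qed.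
Lemma ptR (g1 g2 f : Mor Ct) : src g2 = unitK -> tgt f = src g1 -> (g1 ⊗ g2) ∘ f = (g1 ∘ f) ⊗ g2.
Proof. intros. transitivity ((g1 ⊗ g2) ∘ (f ⊗ idm unitK)). rewrite tensm_unit_r; auto.
  rewrite tcomp by st. rewrite (idr g2) by st. auto. Qed.
End G4.
Section G5.
Context {Ct : SBMCat}.
Lemma kl (f g : Mor Ct) A : tgt f = unitK -> src g = A -> f ⊗ g = g ∘ (f ⊗ idm A).
Proof. intros. transitivity ((idm unitK ∘ f) ⊗ (g ∘ idm A)).
  rewrite idl, idr by st; auto. rewrite <- tcomp by st. rewrite tensm_unit_l. auto. Qed.
Lemma kr (f g : Mor Ct) A : tgt g = unitK -> src f = A -> f ⊗ g = f ∘ (idm A ⊗ g).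
Proof. intros. transitivity ((f ∘ idm A) ⊗ (idm unitK ∘ g)).
  rewrite idl, idr by st; auto. rewrite <- tcomp by st. rewrite tensm_unit_r. auto. Qed.
End G5.
Section G6.
Context {Ct : SBMCat}.
Lemma assoc3 (h a b c : Mor Ct) : tgt c = src b -> tgt b = src a -> tgt a = src h ->
  h ∘ a ∘ b ∘ c = h ∘ (a ∘ b ∘ c).
Proof. intros. rewrite !comp_assoc; auto; st. Qed.
Lemma assoc4 (h a b c d : Mor Ct) : tgt d = src c -> tgt c = src b -> tgt b = src a -> tgt a = src h ->
  h ∘ a ∘ b ∘ c ∘ d = h ∘ (a ∘ b ∘ c ∘ d).
Proof. intros. rewrite !comp_assoc; auto; st. Qed.
End G6.
Ltac rwc H :=
  (match type of H with
  | comp (comp (comp ?a ?b) ?c) ?d = _ => first [ rewrite H | match goal with |- context [comp (comp (comp (comp ?h a) b) c) d] =>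
        rewrite (assoc4 h a b c d) by st; rewrite H end ]
  | comp (comp ?a ?b) ?c = _ => first [ rewrite H | match goal with |- context [comp (comp (comp ?h a) b) c] =>
        rewrite (assoc3 h a b c) by st; rewrite H end ]
  | comp ?a ?b = _ => first [ rewrite H | match goal with |- context [comp (comp ?h a) b] =>
        rewrite <- (@comp_assoc _ b a h) by st; rewrite H end ]
  end); cl.

Section CB.
Variable Ct : SBMCat.
Variables C B : Obj Ct.
Variables epsC deltaC etaB muB psi sigma nu : Mor Ct.
Hypothesis sepsC : src epsC = C. Hypothesis tepsC : tgt epsC = unitK.
Hypothesis sdeltaC : src deltaC = C. Hypothesis tdeltaC : tgt deltaC = C ⊙ C.
Hypothesis setaB : src etaB = unitK. Hypothesis tetaB : tgt etaB = B.
Hypothesis smuB : src muB = B ⊙ B. Hypothesis tmuB : tgt muB = B.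
Hypothesis spsi : src psi = B ⊙ C. Hypothesis tpsi : tgt psi = C ⊙ B.
Hypothesis ssigma : src sigma = C ⊙ C. Hypothesis tsigma : tgt sigma = C ⊙ B.
Hypothesis snu : src nu = unitK. Hypothesis tnu : tgt nu = C ⊙ B.
Hypothesis massoc : muB ∘ (muB ⊗ idm B) = muB ∘ (idm B ⊗ muB).
Hypothesis munitl : muB ∘ (etaB ⊗ idm B) = idm B.
Hypothesis munitr : muB ∘ (idm B ⊗ etaB) = idm B.

Lemma I2 : nabla C B etaB muB psi ∘ (idm C ⊗ muB) = (idm C ⊗ muB) ∘ (nabla C B etaB muB psi ⊗ idm B).
Proof.
  unfold nabla. set (X := psi ∘ (etaB ⊗ idm C)).
  assert (sX : src X = C) by (unfold X; st). assert (tX : tgt X = C ⊙ B) by (unfold X; st).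
  rewrite (ufl (X ⊗ idm B) (idm C ⊗ muB) (idm B)) by st. norm.
  rewrite massoc.
  rewrite (ufr (idm C) muB (idm B ⊗ muB)) by st. norm. reflexivity.
Qed.

Hypothesis P3 : (idm C ⊗ muB) ∘ (psi ⊗ idm B) ∘ (idm B ⊗ nu) = beta_nu C B muB nu.
Lemma I1 : nabla C B etaB muB psi ∘ nu = nu.
Proof.
  assert (H := f_equal (fun m => m ∘ etaB) P3). simpl in H. unfold beta_nu in H.
  rewrite <- (@comp_assoc _ etaB) in H by st.
  rewrite (kk etaB nu B (C ⊙ B)) in H by st.
  rewrite <- (@comp_assoc _ etaB) in H by st.
  rewrite (kk2 nu etaB B), <- (kk1 nu etaB (C ⊙ B)) in H by st.
  unfold nabla. revert H. norm. rewrite munitr. norm. auto.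
Qed.

Lemma snab : src (nabla C B etaB muB psi) = C ⊙ B. Proof. unfold nabla; st. Qed.
Lemma tnab : tgt (nabla C B etaB muB psi) = C ⊙ B. Proof. unfold nabla; st. Qed.
Hypothesis P2 : (idm C ⊗ muB) ∘ (sigma ⊗ idm B) ∘ (idm C ⊗ nu) = nabla C B etaB muB psi ∘ (idm C ⊗ etaB).
Lemma I3 : mu_CA C B muB psi sigma ∘ (idm C ⊗ idm B ⊗ nu) = nabla C B etaB muB psi.
Proof.
  pose proof snab; pose proof tnab.
  unfold mu_CA. cl.
  rewrite (sl2 sigma muB (C ⊙ C) B) by st. cl.
  fz (idm C ⊗ psi ⊗ idm B) (idm C ⊗ idm B ⊗ nu).
  fz (idm C ⊗ idm C ⊗ muB) (idm C ⊗ (psi ⊗ idm B ∘ idm B ⊗ nu)).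
  rewrite P3. unfold beta_nu. rewrite (ufr (idm C) (idm C ⊗ muB) (nu ⊗ idm B)) by st. cl.
  fz (sigma ⊗ idm B) (idm C ⊗ idm C ⊗ muB).
  rewrite (sl1 sigma muB (C ⊙ B) (B ⊙ B)) by st. cl.
  fz (idm C ⊗ muB) (idm C ⊗ idm B ⊗ muB).
  rewrite <- massoc, (ufr (idm C) muB (muB ⊗ idm B)) by st. cl.
  rewrite <- (tensm_assoc (idm C) muB (idm B)), <- (tensm_assoc sigma (idm B) (idm B)),
    <- (tensm_assoc (idm C) nu (idm B)).
  fzr ((sigma ⊗ idm B) ⊗ idm B) ((idm C ⊗ nu) ⊗ idm B).
  fzr ((idm C ⊗ muB) ⊗ idm B) ((sigma ⊗ idm B ∘ idm C ⊗ nu) ⊗ (idm B ∘ idm B)).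
  rewrite (@comp_assoc _ (idm C ⊗ nu) (sigma ⊗ idm B) (idm C ⊗ muB)) by st.
  rewrite P2. rewrite (ufl (idm C ⊗ etaB) (nabla C B etaB muB psi) (idm B ∘ (idm B ∘ idm B))) by st. cl.
  rewrite <- I2. cl. fz (idm C ⊗ muB) (idm C ⊗ etaB ⊗ idm B). rewrite munitl. cl. reflexivity.
Qed.
Lemma smuCA : src (mu_CA C B muB psi sigma) = C ⊙ B ⊙ C ⊙ B. Proof. unfold mu_CA; st. Qed.
Lemma tmuCA : tgt (mu_CA C B muB psi sigma) = C ⊙ B. Proof. unfold mu_CA; st. Qed.
Lemma Lin : mu_CA C B muB psi sigma ∘ (idm C ⊗ idm B ⊗ idm C ⊗ muB) =
  (idm C ⊗ muB) ∘ (mu_CA C B muB psi sigma ⊗ idm B).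
Proof.
  unfold mu_CA. uf.
  fz (idm C ⊗ psi ⊗ idm B) (idm C ⊗ idm B ⊗ idm C ⊗ muB).
  fz (psi ⊗ idm B) (idm B ⊗ idm C ⊗ muB).
  rewrite (sl1 psi muB (C ⊙ B) (B ⊙ B)) by st. uf.
  fz (sigma ⊗ muB) (idm C ⊗ idm C ⊗ idm B ⊗ muB).
  rewrite <- massoc.
  rewrite (sl1 sigma (muB ∘ muB ⊗ idm B) (C ⊙ B) (B ⊙ B ⊙ B)) by st. cl.
  fz (idm C ⊗ muB) (idm C ⊗ idm B ⊗ (muB ∘ muB ⊗ idm B)).
  rewrite (sl1 sigma (muB ⊗ idm B) (C ⊙ B) (B ⊙ B ⊙ B)) by st. cl.
  fz (idm C ⊗ muB ⊗ idm B) (idm C ⊗ idm B ⊗ muB ⊗ idm B).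
  fz (idm C ⊗ muB) (idm C ⊗ (muB ⊗ idm B ∘ idm B ⊗ muB ⊗ idm B)).
  rewrite (ufr (idm B) muB (muB ⊗ idm B)) by st. cl. rewrite <- massoc. reflexivity.
Qed.
Lemma I4 : mu_CA C B muB psi sigma ∘ (idm C ⊗ idm B ⊗ beta_nu C B muB nu) =
  (idm C ⊗ muB) ∘ (nabla C B etaB muB psi ⊗ idm B).
Proof.
  pose proof smuCA; pose proof tmuCA; pose proof snab; pose proof tnab.
  unfold beta_nu. uf. rewrite Lin.
  rewrite <- (tensm_assoc (idm B) nu (idm B)), <- (tensm_assoc (idm C) (idm B ⊗ nu) (idm B)).
  rewrite <- (@comp_assoc _ _ (mu_CA C B muB psi sigma ⊗ idm B)) by st.
  rewrite tcomp by st. rewrite I3. cl. reflexivity.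
Qed.
Lemma sbeta : src (beta_nu C B muB nu) = B. Proof. unfold beta_nu; st. Qed.
Lemma tbeta : tgt (beta_nu C B muB nu) = C ⊙ B. Proof. unfold beta_nu; st. Qed.
Lemma I6 : nabla C B etaB muB psi ∘ beta_nu C B muB nu = beta_nu C B muB nu.
Proof.
  pose proof snab; pose proof tnab.
  unfold beta_nu. cl. rewrite I2.
  rewrite <- (@comp_assoc _ _ (nabla C B etaB muB psi ⊗ idm B)) by st.
  rewrite tcomp by st. rewrite I1. cl. reflexivity.
Qed.
Lemma I5 : mu_CA C B muB psi sigma ∘ (beta_nu C B muB nu ⊗ beta_nu C B muB nu) =
  beta_nu C B muB nu ∘ muB.
Proof.
  pose proof smuCA; pose proof tmuCA; pose proof snab; pose proof tnab; pose proof sbeta; pose proof tbeta.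
  rewrite (sl1 (beta_nu C B muB nu) (beta_nu C B muB nu) (C ⊙ B) B) by st. cl.
  rewrite I4. rewrite <- (@comp_assoc _ _ (nabla C B etaB muB psi ⊗ idm B)) by st.
  rewrite tcomp by st. rewrite I6. cl.
  unfold beta_nu. uf. fz (idm C ⊗ muB) (idm C ⊗ muB ⊗ idm B). rewrite massoc.
  rewrite <- (@comp_assoc _ muB (nu ⊗ idm B)) by st. rewrite (ptL nu (idm B) muB) by st. cl.
  rewrite (sl1 nu muB (C ⊙ B) (B ⊙ B)) by st. cl.
  fz (idm C ⊗ muB) (idm C ⊗ idm B ⊗ muB). reflexivity.
Qed.
Variables chi tau : Mor Ct.
Hypothesis schi : src chi = C ⊙ B. Hypothesis tchi : tgt chi = B ⊙ C.
Hypothesis stau : src tau = C ⊙ B. Hypothesis ttau : tgt tau = B ⊙ B.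
Hypothesis cunl : (epsC ⊗ idm C) ∘ deltaC = idm C.
Hypothesis cunr : (idm C ⊗ epsC) ∘ deltaC = idm C.
Hypothesis CA : (chi ⊗ idm C) ∘ (idm C ⊗ chi) ∘ (deltaC ⊗ idm B) = (idm B ⊗ deltaC) ∘ chi.
Hypothesis TG : tau ∘ Gamma C B epsC deltaC chi = tau.
Hypothesis TW : (tau ⊗ idm C) ∘ (idm C ⊗ chi) ∘ (deltaC ⊗ idm B) =
    (idm B ⊗ chi) ∘ (chi ⊗ idm B) ∘ (idm C ⊗ tau) ∘ (deltaC ⊗ idm B).
Lemma E1 : (epsC ⊗ idm B) ∘ Gamma C B epsC deltaC chi = (idm B ⊗ epsC) ∘ chi.
Proof.
  unfold Gamma. cl.
  fz (epsC ⊗ idm B) (idm C ⊗ idm B ⊗ epsC).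
  fz (epsC ⊗ idm B ⊗ epsC) (idm C ⊗ chi).
  rewrite (kl epsC (idm B ⊗ epsC ∘ chi) (C ⊙ B)) by st. cl.
  fz (epsC ⊗ idm C ⊗ idm B) (deltaC ⊗ idm B). rewrite cunl. cl. reflexivity.
Qed.
Lemma StepA : tau = (idm B ⊗ ((idm B ⊗ epsC) ∘ chi)) ∘ (chi ⊗ idm B) ∘ (idm C ⊗ tau) ∘ (deltaC ⊗ idm B).
Proof.
  assert (H := f_equal (fun m => (idm B ⊗ idm B ⊗ epsC) ∘ m) TW). simpl in H.
  revert H. cl. fz (idm B ⊗ idm B ⊗ epsC) (tau ⊗ idm C). fz (idm B ⊗ idm B ⊗ epsC) (idm B ⊗ chi).
  rewrite (kr tau epsC (C ⊙ B)) by st. cl. intro H. rewrite <- H.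
  rewrite <- TG at 1. unfold Gamma. cl. reflexivity.
Qed.
Lemma I8 : (((epsC ⊗ idm B) ∘ Gamma C B epsC deltaC chi) ⊗ ((epsC ⊗ idm B) ∘ Gamma C B epsC deltaC chi))
   ∘ delta_CA C B deltaC chi tau = tau.
Proof.
  rewrite E1. rewrite StepA at 2. unfold delta_CA.
  set (E' := (idm B ⊗ epsC) ∘ chi).
  assert (sE : src E' = C ⊙ B) by (unfold E'; st). assert (tE : tgt E' = B) by (unfold E'; st).
  rewrite (sl1 E' E' B (C ⊙ B)) by st. rewrite (sl2 deltaC tau C (B ⊙ B)) by st. cl.
  assert (Inner : (E' ⊗ idm C) ∘ (idm C ⊗ chi) ∘ (deltaC ⊗ idm B) = chi).
  { unfold E'. rewrite (ufl chi (idm B ⊗ epsC) (idm C)) by st. cl. rwc CA.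
    fz (idm B ⊗ epsC ⊗ idm C) (idm B ⊗ deltaC). rewrite cunl. cl. reflexivity. }
  rewrite <- (tensm_assoc E' (idm C) (idm B)), <- (tensm_assoc (idm C) chi (idm B)),
     <- (tensm_assoc deltaC (idm B) (idm B)).
  fzr ((E' ⊗ idm C) ⊗ idm B) ((idm C ⊗ chi) ⊗ idm B).
  fzr ((E' ⊗ idm C ∘ idm C ⊗ chi) ⊗ (idm B ∘ idm B)) ((deltaC ⊗ idm B) ⊗ idm B).
  rewrite Inner. cl. reflexivity.
Qed.
Lemma I7a : beta_nu C B muB nu ∘ etaB = nu.
Proof.
  unfold beta_nu. rewrite <- (@comp_assoc _ etaB (nu ⊗ idm B)) by st.
  rewrite (ptL nu (idm B) etaB) by st. cl.
  rewrite <- (kk1 nu etaB (C ⊙ B)) by st. cl.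
  fz (idm C ⊗ muB) (idm C ⊗ idm B ⊗ etaB). rewrite munitr. cl. reflexivity.
Qed.
Hypothesis EN : (epsC ⊗ idm B) ∘ nu = etaB.
Lemma I7b : (epsC ⊗ idm B) ∘ beta_nu C B muB nu = idm B.
Proof.
  unfold beta_nu. cl. fz (epsC ⊗ idm B) (idm C ⊗ muB).
  rewrite (kl epsC muB (B ⊙ B)) by st. cl.
  fz (epsC ⊗ idm B ⊗ idm B) (nu ⊗ idm B). rewrite EN. rewrite munitl. reflexivity.
Qed.
End CB.
Section Main.
Variable Ct : SBMCat.
Variables C B D X : Obj Ct.
Variables muB etaB epsB deltaB epsC nu ups tau beta nab muCA deltaCA i p w w' etaD muD epsD deltaD : Mor Ct.
Hypothesis smuB : src muB = B ⊙ B. Hypothesis tmuB : tgt muB = B.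
Hypothesis setaB : src etaB = unitK. Hypothesis tetaB : tgt etaB = B.
Hypothesis sepsB : src epsB = B. Hypothesis tepsB : tgt epsB = unitK.
Hypothesis sdeltaB : src deltaB = B. Hypothesis tdeltaB : tgt deltaB = B ⊙ B.
Hypothesis sepsC : src epsC = C. Hypothesis tepsC : tgt epsC = unitK.
Hypothesis snu : src nu = unitK. Hypothesis tnu : tgt nu = C ⊙ B.
Hypothesis sups : src ups = C ⊙ B. Hypothesis tups : tgt ups = unitK.
Hypothesis stau : src tau = C ⊙ B. Hypothesis ttau : tgt tau = B ⊙ B.
Hypothesis sbeta : src beta = B. Hypothesis tbeta : tgt beta = C ⊙ B.
Hypothesis snab : src nab = C ⊙ B. Hypothesis tnab : tgt nab = C ⊙ B.
Hypothesis smuCA : src muCA = C ⊙ B ⊙ C ⊙ B. Hypothesis tmuCA : tgt muCA = C ⊙ B.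
Hypothesis sdeltaCA : src deltaCA = C ⊙ B. Hypothesis tdeltaCA : tgt deltaCA = C ⊙ B ⊙ C ⊙ B.
Hypothesis si : src i = X. Hypothesis ti : tgt i = C ⊙ B.
Hypothesis sp : src p = C ⊙ B. Hypothesis tp : tgt p = X.
Hypothesis sw : src w = X. Hypothesis tw : tgt w = D.
Hypothesis sw' : src w' = D. Hypothesis tw' : tgt w' = X.
Hypothesis setaD : src etaD = unitK. Hypothesis tetaD : tgt etaD = D.
Hypothesis smuD : src muD = D ⊙ D. Hypothesis tmuD : tgt muD = D.
Hypothesis sepsD : src epsD = D. Hypothesis tepsD : tgt epsD = unitK.
Hypothesis sdeltaD : src deltaD = D. Hypothesis tdeltaD : tgt deltaD = D ⊙ D.
Hypothesis Hpi : p ∘ i = idm X. Hypothesis Hip : i ∘ p = nab.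
Hypothesis Hww : w' ∘ w = idm X. Hypothesis Hww' : w ∘ w' = idm D.
Hypothesis Weta : w ∘ (p ∘ nu) = etaD.
Hypothesis Wmu : w ∘ (p ∘ muCA ∘ (i ⊗ i)) = muD ∘ (w ⊗ w).
Hypothesis Weps : epsD ∘ w = ups ∘ i.
Hypothesis Wdel : deltaD ∘ w = (w ⊗ w) ∘ ((p ⊗ p) ∘ deltaCA ∘ i).
Hypothesis Hups : ups = (epsC ⊗ epsB) ∘ nab.
Hypothesis Htau : tau = (epsC ⊗ deltaB) ∘ nab.
Hypothesis Hdb : deltaCA ∘ beta = (beta ⊗ beta) ∘ deltaB.
Hypothesis I2 : nab ∘ (idm C ⊗ muB) = (idm C ⊗ muB) ∘ (nab ⊗ idm B).
Hypothesis I4 : muCA ∘ (idm C ⊗ idm B ⊗ beta) = (idm C ⊗ muB) ∘ (nab ⊗ idm B).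
Hypothesis I5 : muCA ∘ (beta ⊗ beta) = beta ∘ muB.
Hypothesis I6 : nab ∘ beta = beta.
Hypothesis I7a : beta ∘ etaB = nu.
Hypothesis I7b : (epsC ⊗ idm B) ∘ beta = idm B.
Hypothesis I8 : (((epsC ⊗ idm B) ∘ nab) ⊗ ((epsC ⊗ idm B) ∘ nab)) ∘ deltaCA = tau.

Lemma nabi : nab ∘ i = i.
Proof. rewrite <- Hip. rewrite <- comp_assoc by st. rewrite Hpi. cl. reflexivity. Qed.
Lemma ipb : i ∘ (p ∘ beta) = beta.
Proof. rewrite comp_assoc by st. rewrite Hip, I6. reflexivity. Qed.

Lemma G6 : (epsC ⊗ idm B) ∘ i ∘ w' ∘ (w ∘ p ∘ beta) = idm B.
Proof.
  cl. rwc Hww. rwc Hip. rwc I6. exact I7b.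
Qed.
Lemma G3a : (w ∘ p ∘ beta) ∘ etaB = etaD.
Proof. cl. rwc I7a. rewrite <- Weta. cl. reflexivity. Qed.
Lemma G3b : (w ∘ p ∘ beta) ∘ muB = muD ∘ ((w ∘ p ∘ beta) ⊗ (w ∘ p ∘ beta)).
Proof.
  assert (Wmu' : muD ∘ (w ⊗ w) = w ∘ p ∘ muCA ∘ (i ⊗ i)) by (rewrite <- Wmu; cl; reflexivity).
  rewrite <- (tcomp beta (w ∘ p) beta (w ∘ p)) by st.
  rewrite <- (tcomp p w p w) by st. cl. rwc Wmu'.
  fz (i ⊗ i) (p ⊗ p). rewrite Hip. fz (nab ⊗ nab) (beta ⊗ beta). rewrite I6. rwc I5. reflexivity.
Qed.
Lemma G4a : epsD ∘ (w ∘ p ∘ beta) = epsB.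
Proof.
  cl. rwc Weps. rwc Hip. rwc I6. rewrite Hups. cl. rwc I6.
  rewrite (kl epsC epsB B) by st. cl. rwc I7b. reflexivity.
Qed.
Lemma G4b : deltaD ∘ (w ∘ p ∘ beta) = ((w ∘ p ∘ beta) ⊗ (w ∘ p ∘ beta)) ∘ deltaB.
Proof.
  cl. rwc Wdel. rwc Hip. rwc I6. rwc Hdb.
  rewrite <- (tcomp beta (w ∘ p) beta (w ∘ p)) by st.
  rewrite <- (tcomp p w p w) by st. cl. reflexivity.
Qed.
Lemma G5a : epsB ∘ ((epsC ⊗ idm B) ∘ i ∘ w') = epsD.
Proof.
  rewrite <- (idr epsD D) by st. rewrite <- Hww'. cl. rwc Weps. rewrite Hups. cl. rwc nabi.
  rewrite <- (kl epsC epsB B) by st. reflexivity.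
Qed.
Lemma G5b : deltaB ∘ ((epsC ⊗ idm B) ∘ i ∘ w') =
   (((epsC ⊗ idm B) ∘ i ∘ w') ⊗ ((epsC ⊗ idm B) ∘ i ∘ w')) ∘ deltaD.
Proof.
  rewrite <- (idr deltaD D) by st. rewrite <- Hww'. cl. rwc Wdel.
  fz (((epsC ⊗ idm B) ∘ i ∘ w') ⊗ ((epsC ⊗ idm B) ∘ i ∘ w')) (w ⊗ w).
  rwc Hww.
  fz (((epsC ⊗ idm B) ∘ i) ⊗ ((epsC ⊗ idm B) ∘ i)) (p ⊗ p).
  rwc Hip. rewrite I8. rewrite Htau. cl. rwc nabi.
  rewrite (kl epsC deltaB B) by st. cl. reflexivity.
Qed.
Lemma G7 : (epsC ⊗ idm B) ∘ i ∘ w' ∘ muD ∘ (idm D ⊗ (w ∘ p ∘ beta)) =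
   muB ∘ (((epsC ⊗ idm B) ∘ i ∘ w') ⊗ idm B).
Proof.
  assert (MuD : muD = w ∘ (p ∘ muCA ∘ (i ⊗ i)) ∘ (w' ⊗ w')).
  { rewrite Wmu. rewrite <- (@comp_assoc _ (w' ⊗ w')) by st. rewrite tcomp by st.
    rewrite Hww'. cl. reflexivity. }
  rewrite MuD. cl. rwc Hww. rwc Hip.
  fz (i ⊗ i) (w' ⊗ w'). fz ((i ∘ w') ⊗ (i ∘ w')) (idm D ⊗ (w ∘ p ∘ beta)).
  rwc Hww. rwc Hip. rwc I6.
  rewrite (sl1 (i ∘ w') beta (C ⊙ B) B) by st. cl.
  rwc I4. rwc I2.
  fz (nab ⊗ idm B) ((i ∘ w') ⊗ idm B). fz (nab ⊗ idm B) ((nab ∘ i ∘ w') ⊗ idm B).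
  rwc nabi. rwc nabi.
  fz (epsC ⊗ idm B) (idm C ⊗ muB).
  rewrite (kl epsC muB (B ⊙ B)) by st. cl.
  fz (epsC ⊗ idm B ⊗ idm B) ((i ∘ w') ⊗ idm B). reflexivity.
Qed.
Variable lamB : Mor Ct.
Lemma MainAll : is_weak_bialgebra D etaD muD epsD deltaD -> is_weak_hopf B etaB muB epsB deltaB lamB ->
  is_weak_projection D etaD muD epsD deltaD B etaB muB epsB deltaB lamB
    (w ∘ p ∘ beta) ((epsC ⊗ idm B) ∘ i ∘ w').
Proof.
  intros HD HB. unfold is_weak_projection, is_alg_morphism, is_coalg_morphism, hom.
  split; [exact HD|]. split; [exact HB|].
  split; [split; [split; st|split; [exact G3a|exact G3b]]|].
  split; [split; [split; st|split; [exact G4a|exact G4b]]|].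
  split; [split; [split; st|split; [exact G5a|exact G5b]]|].
  split; [exact G6|exact G7].
Qed.
End Main.

Theorem theorem3p12 (Ct : SBMCat) (D C B : Obj Ct)
  (etaD muD epsD deltaD : Mor Ct)
  (epsC deltaC : Mor Ct)
  (etaB muB epsB deltaB lamB : Mor Ct)
  (psi sigma chi tau nu ups : Mor Ct) :
  is_weak_bialgebra D etaD muD epsD deltaD ->
  is_coalgebra C epsC deltaC ->
  is_weak_hopf B etaB muB epsB deltaB lamB ->
  is_weak_crossed_biproduct D etaD muD epsD deltaD C epsC deltaC B etaB muB
    psi sigma chi tau nu ups ->
  delta_CA C B deltaC chi tau ∘ beta_nu C B muB nu =
    (beta_nu C B muB nu ⊗ beta_nu C B muB nu) ∘ deltaB ->
  tau = (epsC ⊗ deltaB) ∘ nabla C B etaB muB psi ->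
  ups = (epsC ⊗ epsB) ∘ nabla C B etaB muB psi ->
  exists f g : Mor Ct,
    is_weak_projection D etaD muD epsD deltaD B etaB muB epsB deltaB lamB f g.
Proof.
  intros HD HC HB HX Hdb Htau Hups.
  pose proof HB as HB0. pose proof HD as HD0.
  destruct HB as [[[[setaB tetaB] [[smuB tmuB] [massoc [munitl munitr]]]]
                   [[[sepsB tepsB] [[sdeltaB tdeltaB] [_ [_ _]]]] _]] _].
  destruct HC as [[sepsC tepsC] [[sdeltaC tdeltaC] [_ [cunl cunr]]]].
  destruct HX as (_ & _ & _ & Hwcp & Hwcc & Hng & Hex & EN & UE).
  destruct Hwcp as ([spsi tpsi] & [ssigma tsigma] & [snu tnu] & _ & _ & _ & _ & _ & P1 & P2 & P3).
  destruct Hwcc as ([schi tchi] & [stau ttau] & [sups tups] & CA & _ & TG & TW & _ & _ & _ & _).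
  destruct Hex as (X & i & p & w & w' & [si ti] & [sp tp] & Hpi & Hip & [sw tw] & [sw' tw'] &
     Hww & Hww' & [_ [Weta Wmu]] & [_ [Weps Wdel]]).
  destruct HD as [[[setaD tetaD] [[smuD tmuD] _]] [[[sepsD tepsD] [[sdeltaD tdeltaD] _]] _]].
  exists (w ∘ p ∘ beta_nu C B muB nu), ((epsC ⊗ idm B) ∘ i ∘ w').
  eapply (MainAll Ct C B D X muB etaB epsB deltaB epsC nu ups tau (beta_nu C B muB nu)
    (nabla C B etaB muB psi) (mu_CA C B muB psi sigma) (delta_CA C B deltaC chi tau)
    i p w w' etaD muD epsD deltaD).
  all: try eassumption.
  all: try (unfold nabla, beta_nu, mu_CA, delta_CA; st).
  - eapply I2 with (etaB := etaB); eassumption.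
  - eapply I4 with (etaB := etaB); eassumption.
  - eapply I5 with (etaB := etaB); eassumption.
  - eapply I6 with (etaB := etaB); eassumption.
  - eapply I7a with (etaB := etaB); eassumption.
  - eapply I7b with (etaB := etaB); eassumption.
  - rewrite Hng. eapply I8; eassumption.
Qed.
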